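(* Let $X$ be a locally compact Hausdorff space and $\sigma:X\to X$ a homeomorphism. Let $S\subset\{1,2,3,\dots\}$ be a non-empty (finite or infinite) set and $P_S=\{p\in\{1,2,3,\dots\}: p\text{ divides some }s\in S\}$. Then $$\bigcup_{p\in P_S}\mathrm{Per}_p(\sigma)^\circ\subset\bigcup_{s\in S}\mathrm{Fix}_s(\sigma)^\circ\subset\Big(\bigcup_{s\in S}\mathrm{Fix}_s(\sigma)\Big)^\circ\subset\overline{\bigcup_{p\in P_S}\mathrm{Per}_p(\sigma)^\circ},$$ $$\bigcup_{p\in P_S}\mathrm{Per}_p(\sigma)^\circ\subset\Big(\bigcup_{p\in P_S}\mathrm{Per}_p(\sigma)\Big)^\circ\subset\Big(\bigcup_{s\in S}\mathrm{Fix}_s(\sigma)\Big)^\circ,$$ and $$\overline{\Big(\bigcup_{p\in P_S}\mathrm{Per}_p(\sigma)\Big)^\circ}=\overline{\bigcup_{p\in P_S}\mathrm{Per}_p(\sigma)^\circ}=\overline{\bigcup_{s\in S}\mathrm{Fix}_s(\sigma)^\circ}=\overline{\Big(\bigcup_{s\in S}\mathrm{Fix}_s(\sigma)\Big)^\circ}.$$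
   Context: For $n\ge1$, $\mathrm{Fix}_n(\sigma)=\{x\in X:\sigma^nx=x\}$ and $\mathrm{Per}_p(\sigma)$ is the set of points of least period exactly $p$. A superscript $\circ$ denotes interior in $X$ and an overline denotes closure in $X$. *)

(* Defs.v *)
From HB Require Import structures.
From mathcomp Require Import all_boot all_order all_algebra.
From mathcomp Require Import all_classical all_reals all_analysis.
Set Implicit Arguments. Unset Strict Implicit. Unset Printing Implicit Defensive.
Local Open Scope classical_set_scope.

Definition Fix {X : Type} (sigma : X -> X) (n : nat) : set X :=
  [set x | iter n sigma x = x].

Definition Per {X : Type} (sigma : X -> X) (p : nat) : set X :=
  [set x | (0 < p)%N /\ iter p sigma x = x /\
           forall k, (0 < k)%N -> (k < p)%N -> iter k sigma x <> x].

Definition PS (S : set nat) : set nat :=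
  [set p | (0 < p)%N /\ exists2 s, S s & (p %| s)%N].

Definition homeomorphism {X : topologicalType} (sigma : X -> X) : Prop :=
  continuous sigma /\ exists tau : X -> X,
    continuous tau /\ cancel sigma tau /\ cancel tau sigma.

(* Main.v *)
Require Import Defs.
From HB Require Import structures.
From mathcomp Require Import all_boot all_order all_algebra.
From mathcomp Require Import all_classical all_reals all_analysis.
Local Open Scope classical_set_scope.

Lemma compact_nbhs_in (X : topologicalType) (x : X) (O : set X) :
  hausdorff_space X -> locally_compact [set: X] -> nbhs x O ->
  exists K, [/\ compact K, nbhs x K & K `<=` O].
Proof.
move=> hs lc Ox.
have [U] := lc x I; rewrite withinET => Ux [cU clU].
have reg := compact_regular hs cU Ux.
have [N Nx NOU] := reg (O `&` U) (filterI Ox Ux).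
exists (closure N); split.
- apply: subclosed_compact cU _; first exact: closed_closure.
  by move=> y /NOU [].
- by apply: filterS Nx; exact: subset_closure.
- by move=> y /NOU [].
Qed.

Lemma closed_Fix (X : topologicalType) (f : X -> X) :
  hausdorff_space X -> continuous f -> closed [set y | f y = y].
Proof.
move=> hs cf y cly; apply: hs => A B Afy By.
have : nbhs y (B `&` f @^-1` A) by apply: filterI => //; exact: cf.
move=> /cly [z [/= fz [Bz Afz]]]; exists z; split => //; by rewrite -fz.
Qed.

Lemma continuous_iter (X : topologicalType) (f : X -> X) n :
  continuous f -> continuous (iter n f).
Proof.
move=> cf; elim: n => [|n IH] /=; first by move=> x; exact: cvg_id.
move=> x; apply: continuous_comp; [exact: IH | exact: cf].
Qed.

Lemma baire_lc (X : topologicalType) (U : set X) (F : nat -> set X) :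
  hausdorff_space X -> locally_compact [set: X] ->
  open U -> U !=set0 -> (forall n, closed (F n)) -> U `<=` \bigcup_n F n ->
  exists n, (U `&` (F n)°) !=set0.
Proof.
move=> hs lc oU [u Uu] cF UF.
apply: contrapT => Hno.
have Hn : forall n, ~ ((U `&` (F n)°) !=set0) by move=> n H; apply: Hno; exists n.
have step : forall nK : nat * set X, exists K' : set X,
    (compact nK.2 /\ nK.2° !=set0 /\ nK.2 `<=` U) ->
    [/\ compact K', K'° !=set0, K' `<=` nK.2 & K' `<=` ~` F nK.1].
  move=> [n K] /=.
  have [[cK [[x Kx] KU]]|no] := pselect (compact K /\ K° !=set0 /\ K `<=` U);
    last by exists set0.
  have [y [Ky nFy]] : exists y, K° y /\ ~ F n y.
    apply: contrapT => H; apply: (Hn n); exists x; split.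
      by apply: KU; exact: interior_subset.
    have : K° `<=` (F n)°.
      have <- : (K°)° = K° by apply/interior_id; exact: open_interior.
      apply: interiorS => z Kz; apply: contrapT => nF; apply: H; by exists z.
    by apply.
  have oO : open (K° `&` ~` F n).
    by apply: openI; [exact: open_interior | exact: closed_openC].
  have Oy : nbhs y (K° `&` ~` F n).
    by apply: open_nbhs_nbhs; split.
  have [K' [cK' yK' K'O]] := compact_nbhs_in _ _ _ hs lc Oy.
  exists K' => _; split => //.
  - by exists y.
  - by move=> z /K'O [/interior_subset].
  - by move=> z /K'O [].
have [g Hg] := choice step.
have Un : nbhs u U by exact: open_nbhs_nbhs.
have [K0 [cK0 uK0 K0U]] := compact_nbhs_in _ _ _ hs lc Un.
pose G := fix G (n : nat) : set X := if n is m.+1 then g (m, G m) else K0.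
have inv : forall n, compact (G n) /\ (G n)° !=set0 /\ G n `<=` U.
  elim=> [|n [cG [iG GU]]]; first by split => //; split => //; exists u.
  have [] := Hg (n, G n) (conj cG (conj iG GU)) => /= c1 i1 s1 f1.
  by split => //; split => //; move=> z /s1 /GU.
have stepS : forall n, G n.+1 `<=` G n /\ G n.+1 `<=` ~` F n.
  move=> n; have [cG [iG GU]] := inv n.
  by have [] := Hg (n, G n) (conj cG (conj iG GU)).
have decr : forall n m, (n <= m)%N -> G m `<=` G n.
  move=> n m /subnK <-; elim: (m - n)%N => [|k IH] //=.
  by move=> z /(proj1 (stepS _)) /IH.
pose FF := filter_from [set: nat] G.
have FFf : Filter FF.
  apply: filter_from_filter; first by exists 0%N.
  move=> i j _ _; exists (maxn i j) => // z Gz; split.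
    by apply: (decr _ _ (leq_maxl i j)).
  by apply: (decr _ _ (leq_maxr i j)).
have FFp : ProperFilter FF.
  apply: filter_from_proper => n _; have [_ [[z /interior_subset Gz] _]] := inv n.
  by exists z.
have [p [G0p clp]] := (proj1 (inv 0%N)) FF FFp (ex_intro2 _ _ 0%N I (fun z (h : G 0%N z) => h)).
have Gp : forall n, G n p.
  move=> n; apply: (compact_closed hs (proj1 (inv n))) => B Bp.
  by apply: clp => //; exists n.
have [n _ Fnp] := UF p (proj2 (proj2 (inv 0%N)) p G0p).
by have := proj2 (stepS n) p (Gp n.+1).
Qed.

Lemma iter_mul (T : Type) (f : T -> T) q x k :
  iter q f x = x -> iter (k * q) f x = x.
Proof.
move=> h; elim: k => [|k IH] //; by rewrite mulSn iterD IH h.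
Qed.

Lemma per_div (T : Type) (f : T -> T) q s x :
  Per f q x -> iter s f x = x -> (q %| s)%N.
Proof.
move=> [q0 [qx qmin]] sx; rewrite /dvdn; apply/eqP.
have e : iter (s %% q) f x = x.
  by rewrite -{2}sx {2}(divn_eq s q) addnC iterD iter_mul.
apply/eqP; apply: contrapT => /negP; rewrite -lt0n => h.
by apply: (qmin _ h (ltn_pmod s q0)).
Qed.

Lemma per_fix (T : Type) (f : T -> T) q s :
  (q %| s)%N -> Per f q `<=` Fix f s.
Proof.
move=> /dvdnP [k ->] x [_ [qx _]]; exact: iter_mul.
Qed.

Lemma per_open (X : topologicalType) (sigma : X -> X) s (V : set X) :
  continuous sigma -> hausdorff_space X ->
  open V -> V !=set0 -> V `<=` Fix sigma s -> (0 < s)%N ->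
  exists q, [/\ (0 < q)%N, (q %| s)%N & ((Per sigma q)° `&` V) !=set0].
Proof.
move=> cs hs oV V0 VF s0.
have clF : forall d, closed (Fix sigma d).
  by move=> d; apply: closed_Fix => //; exact: continuous_iter.
pose P := fun q => `[< (0 < q)%N /\ exists W : set X,
   [/\ open W, W !=set0 & W `<=` V `&` Fix sigma q] >].
have exP : exists n, P n.
  by exists s; apply/asboolP; split => //; exists V; split => // z Vz; split => //; exact: VF.
case: (ex_minnP exP) => q /asboolP [q0 [W [oW W0 WV]]] qmin.
pose Wf := fix Wf (d : nat) : set X :=
  if d is d'.+1 then Wf d' `&` ~` Fix sigma d'.+1 else W.
have inv : forall d, (d < q)%N ->
    [/\ open (Wf d), Wf d !=set0, Wf d `<=` W &
        forall k y, (0 < k)%N -> (k <= d)%N -> Wf d y -> ~ Fix sigma k y].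
  elim=> [|d IH] dq.
    split => // k y k0; rewrite leqn0 => /eqP k_0; by rewrite k_0 in k0.
  have [oW' W0' WW' Wnf] := IH (ltnW dq).
  split.
  - by apply: openI => //; exact: closed_openC.
  - apply: contrapT => hne.
    have sub : Wf d `<=` Fix sigma d.+1.
      move=> z Wz; apply: contrapT => nz; apply: hne; by exists z.
    have : P d.+1.
      apply/asboolP; split => //; exists (Wf d); split => // z Wz; split.
        by have [] := WV z (WW' z Wz).
      exact: sub.
    by move=> /qmin; rewrite leqNgt dq.
  - by move=> z [/WW'].
  - move=> k y k0; rewrite leq_eqVlt => /orP [/eqP -> [_ //]|kd [Wy _]].
    exact: Wnf.
have qq : (q.-1 < q)%N by rewrite ltn_predL.
have [oWq [y Wqy] WqW Wqn] := inv q.-1 qq.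
exists q; split => //.
  have [Vy Fy] := WV y (WqW y Wqy).
  apply: (@per_div _ sigma q s y _ (VF y Vy)); split => //; split.
    by have [] := WV y (WqW y Wqy).
  move=> k k0 kq; apply: Wqn => //; by rewrite -ltnS prednK.
exists y; split; last by have [] := WV y (WqW y Wqy).
apply: (@filterS _ _ _ (Wf q.-1)); last by apply: open_nbhs_nbhs.
move=> z Wz; split => //; split.
  by have [] := WV z (WqW z Wz).
move=> k k0 kq; apply: Wqn => //; by rewrite -ltnS prednK.
Qed.

Theorem propositionA1 (X : topologicalType) (sigma : X -> X) (S : set nat) :
  hausdorff_space X ->
  locally_compact [set: X] ->
  homeomorphism sigma ->
  S `<=` [set n | (0 < n)%N] ->
  S !=set0 ->
  let A := \bigcup_(p in PS S) (Per sigma p)° in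
  let B := \bigcup_(s in S) (Fix sigma s)° in
  let C := (\bigcup_(s in S) Fix sigma s)° in
  let D := (\bigcup_(p in PS S) Per sigma p)° in
  [/\ A `<=` B, B `<=` C & C `<=` closure A] /\
  [/\ A `<=` D & D `<=` C] /\
  [/\ closure D = closure A, closure A = closure B & closure B = closure C].
Proof.
move=> hs lc [cs _] Spos _ A B C D.
have AB : A `<=` B.
  move=> x [p [p0 [s Ss ps]] Hx]; exists s => //.
  by apply: interiorS Hx; exact: per_fix.
have BC : B `<=` C.
  by move=> x [s Ss Hx]; apply: interiorS Hx => y Fy; exists s.
have AD : A `<=` D.
  by move=> x [p Pp Hx]; apply: interiorS Hx => y Py; exists p.
have DC : D `<=` C.
  apply: interiorS => y [p [p0 [s Ss ps]] Py]; exists s => //.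
  exact: (@per_fix _ sigma p s ps y Py).
have CA : C `<=` closure A.
  move=> x Cx N Nx.
  pose U := C `&` N°.
  have oU : open U by apply: openI; exact: open_interior.
  pose F := fun n => [set y | S n /\ Fix sigma n y].
  have cF : forall n, closed (F n).
    move=> n; have [Sn|nSn] := pselect (S n).
      have -> : F n = Fix sigma n.
        by apply/funext => y; apply/propext; split => [[]|] //.
      by apply: closed_Fix => //; exact: continuous_iter.
    have -> : F n = set0.
      by apply/funext => y; apply/propext; split => [[]|] //.
    exact: closed0.
  have UF : U `<=` \bigcup_n F n.
    by move=> y [/interior_subset [s Ss Fy] _]; exists s.
  have U0 : U !=set0 by exists x; split => //; exact: nbhs_interior.
  have [n [z [Uz Fz]]] := baire_lc _ _ _ hs lc oU U0 cF UF.
  have Sn : S n by have [] := interior_subset Fz.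
  have oV : open (U `&` (F n)°) by apply: openI => //; exact: open_interior.
  have VF : U `&` (F n)° `<=` Fix sigma n.
    by move=> y [_ /interior_subset []].
  have V0 : (U `&` (F n)°) !=set0 by exists z.
  have [q [q0 qn [y [Py [[_ Ny] _]]]]] :=
    per_open _ _ _ _ cs hs oV V0 VF (Spos n Sn).
  exists y; split; last exact: interior_subset.
  exists q => //; split => //; by exists n.
have clmin : forall E, E `<=` closure A -> closure E `<=` closure A.
  move=> E h z Hz; apply: closed_closure; exact: closureS h z Hz.
split; first by split.
split; first by split.
split; apply/seteqP; split.
- by apply: clmin => z /DC /CA.
- exact: closureS.
- exact: closureS.
- by apply: clmin => z /BC /CA.
- exact: closureS.
- apply: (subset_trans (clmin _ CA)); exact: closureS.
Qed.
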